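(* Let $G(n,n_1,n_2,n_3,p_1,p_2,p_3)$ be a three-layer stochastic block model network satisfying the standing assumptions below. Fix any one of the three layers as target layer, and apply RemoveEdge to all communities of the other two layers. Then the (expected) modularity of the target layer's partition in the resulting graph is strictly larger than in the original graph.
   Context: Multi-layer stochastic block model $G(n,n_1,\dots,n_L,p_1,\dots,p_L)$: a random graph on $n$ nodes with $L$ layers. For each layer $l$ the nodes are partitioned into $n_l$ planted communities of size $s_l=n/n_l$; independently for each layer, each pair of distinct nodes in a common community of layer $l$ receives an edge from layer $l$ with probability $p_l$; the graph is the simple union of all generated edges, so a pair lying in a common community of exactly the layers in a set $T$ is an edge with probability $1-\prod_{l\in T}(1-p_l)$. The partitions of different layers are independent: for any $k\ge2$ distinct layers and one community from each, their intersection has $n/(n_{l_1}\cdots n_{l_k})$ nodes (in expectation). Standing assumptions: $n_l\ge4$, $p_l\in[0.05,1]$ for every layer, and $n\ge2\prod_l n_l$. RemoveEdge applied to the communities of a layer $l$ deletes every edge whose two endpoints lie in a common community of layer $l$. Modularity of a layer $l$: for a graph with $e$ edges, if community $i$ of $l$ has $e^i_{ll}$ internal edges, $e^i_{lout}$ edges with exactly one endpoint in it, and $d^i_l=2e^i_{ll}+e^i_{lout}$, then $Q_l=\sum_i\big(\frac{e^i_{ll}}{e}-(\frac{d^i_l}{2e})^2\big)$; in the model all edge counts are replaced by their expected values (all communities of a layer having the same expected counts). *)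

(* Defs.v *)
(* Expected-value model of the multi-layer SBM
   G(n, n_1..n_L, p_1..p_L); layers are indexed by 'I_L. *)
From mathcomp Require Import all_boot all_order all_algebra.
Set Implicit Arguments. Unset Strict Implicit. Unset Printing Implicit Defensive.
Import Order.TTheory GRing.Theory Num.Theory.
Local Open Scope ring_scope.

Section SBM.
Variables (R : realFieldType) (L : nat) (n : nat) (nl : 'I_L -> nat).

(* Expected number of unordered pairs of distinct nodes lying in a common
   community of every layer of S: there are prod_{l in S} n_l blocks of
   n / prod_{l in S} n_l nodes each (S = set0 gives all n(n-1)/2 pairs). *)
Definition pairs_all (S : {set 'I_L}) : R :=
  (n%:R / 2) * (n%:R / (\prod_(l in S) nl l)%:R - 1).

(* Expected number of pairs lying in a common community of EXACTLY the
   layers of T (inclusion-exclusion). *)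
Definition pairs_exact (T : {set 'I_L}) : R :=
  \sum_(S : {set 'I_L} | T \subset S) (-1) ^+ #|S :\: T| * pairs_all S.

(* An "edge model": probability that a pair of exact type T is an edge. *)
Definition sbm_prob (p : 'I_L -> R) (T : {set 'I_L}) : R :=
  1 - \prod_(l in T) (1 - p l).

(* RemoveEdge applied to the communities of all layers in D: every pair
   sharing a community of some layer of D loses its edge. *)
Definition remove_edges (D : {set 'I_L}) (w : {set 'I_L} -> R)
  (T : {set 'I_L}) : R := if [disjoint T & D] then w T else 0.

Definition exp_edges (w : {set 'I_L} -> R) : R :=
  \sum_(T : {set 'I_L}) pairs_exact T * w T.

Definition exp_internal (w : {set 'I_L} -> R) (l : 'I_L) : R :=
  \sum_(T : {set 'I_L} | l \in T) pairs_exact T * w T.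

(* per-community expected counts (all n_l communities have equal counts):
   e^i_ll, e^i_lout (each inter-community edge has one endpoint in
   exactly two communities), d^i_l = 2 e^i_ll + e^i_lout *)
Definition e_ll (w : {set 'I_L} -> R) (l : 'I_L) : R :=
  exp_internal w l / (nl l)%:R.
Definition e_lout (w : {set 'I_L} -> R) (l : 'I_L) : R :=
  2 * (exp_edges w - exp_internal w l) / (nl l)%:R.
Definition d_l (w : {set 'I_L} -> R) (l : 'I_L) : R :=
  2 * e_ll w l + e_lout w l.

Definition modularity (w : {set 'I_L} -> R) (l : 'I_L) : R :=
  \sum_(i < nl l) (e_ll w l / exp_edges w - (d_l w l / (2 * exp_edges w)) ^+ 2).

End SBM.

(* Main.v *)
Require Import Defs.
From mathcomp Require Import all_boot all_order all_algebra.
From mathcomp Require Import ring lra.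
Import Order.TTheory GRing.Theory Num.Theory.
Local Open Scope ring_scope.

Lemma key (R : comRingType) (I : finType) (T : {set I}) (y : I -> R) :
 \sum_(S : {set I} | T \subset S) (-1) ^+ #|S :\: T| * \prod_(l in S) y l
 = \prod_(l in T) y l * \prod_(l in ~: T) (1 - y l).
Proof.
pose F i := if i \in T then y i else - y i.
pose G i : R := if i \in T then 0 else 1.
have -> : \prod_(l in T) y l * \prod_(l in ~: T) (1 - y l) = \prod_i (F i + G i).
  rewrite [RHS](bigID (mem T)) /=; congr (_ * _).
    by apply: eq_bigr => i iT; rewrite /F /G iT addr0.
  by apply: eq_big => [i|i]; rewrite ?inE // /F /G => /negbTE ->; rewrite addrC.
rewrite bigA_distr.
match goal with |- ?LL = _ => change (LL = \sum_(J : {set I}) \prod_i (if i \in J then F i else G i)) end.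
rewrite [in RHS](bigID (fun J : {set I} => T \subset J)) /=.
rewrite [X in _ = _ + X]big1 ?addr0; last first.
  move=> J /subsetPn [i iT iJ].
  by rewrite (bigD1 i) //= (negbTE iJ) /G iT mul0r.
apply: eq_bigr => J TJ.
rewrite [RHS](bigID (mem J)) /= [X in _ = _ * X]big1 ?mulr1; last first.
  move=> i iJ; have iT : i \notin T by apply: contra iJ; apply: (subsetP TJ).
  by rewrite (negbTE iJ) /G (negbTE iT).
have -> : \prod_(i in J) (if i \in J then F i else G i)
   = \prod_(i in J) ((if i \in T then 1 else -1) * y i).
  by apply: eq_bigr => i ->; rewrite /F; case: (i \in T); rewrite ?mul1r ?mulN1r.
rewrite big_split /=; congr (_ * _).
rewrite (bigID (mem T)) /= big1 ?mul1r; last by move=> i /andP[_ ->].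
rewrite (eq_bigr (fun _ => -1)); last by move=> i /andP[_ /negbTE ->].
rewrite prodr_const; congr (_ ^+ _); apply: eq_card => i; rewrite !inE andbC.
by [].
Qed.

Section S.
Variables (R : realFieldType) (L n : nat) (nl : 'I_L -> nat).

Lemma pe_formula (T : {set 'I_L}) :
  pairs_exact R n nl T =
  (n%:R / 2 * n%:R) * (\prod_(l in T) (nl l)%:R^-1 * \prod_(l in ~: T) (1 - (nl l)%:R^-1))
  - n%:R / 2 * (\prod_(l in T) (1:R) * \prod_(l in ~: T) (1 - 1)).
Proof.
rewrite /pairs_exact.
transitivity (\sum_(S : {set 'I_L} | T \subset S)
  ((n%:R / 2 * n%:R) * ((-1) ^+ #|S :\: T| * \prod_(l in S) (nl l)%:R^-1)
   - n%:R / 2 * ((-1) ^+ #|S :\: T| * \prod_(l in S) (1:R)))).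
  apply: eq_bigr => S _; rewrite /pairs_all natr_prod -prodfV big1_eq; ring.
by rewrite sumrB -!mulr_sumr !key.
Qed.

Lemma pe_gt0 : (forall l, (2 <= nl l)%N) ->
  (2 * \prod_(l in [set: 'I_L]) nl l <= n)%N ->
  forall T, 0 < pairs_exact R n nl T.
Proof.
move=> hl hn T.
have N0 : (0 < \prod_(l in [set: 'I_L]) nl l)%N.
  by rewrite prodn_gt0 // => l; apply: leq_trans (hl l).
have n0 : (0 < n)%N by apply: leq_trans hn; rewrite muln_gt0.
have n0R : 0 < n%:R :> R by rewrite ltr0n.
have y0 : forall l, 0 < (nl l)%:R^-1 :> R.
  by move=> l; rewrite invr_gt0 ltr0n; apply: leq_trans (hl l).
have y1 : forall l, 0 < 1 - (nl l)%:R^-1 :> R.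
  by move=> l; rewrite subr_gt0 invf_lt1 ?ltr1n ?ltr0n //; apply: leq_trans (hl l).
rewrite pe_formula.
have [->|] := eqVneq T setT.
  rewrite setCT !big_set0 big1_eq !mulr1 prodfV -natr_prod.
  set N := (\prod_(l in [set: 'I_L]) nl l)%:R : R.
  have NR : 0 < N by rewrite ltr0n.
  have hnR : 2 * N <= n%:R by rewrite /N -natrM ler_nat.
  have : N * N^-1 = 1 by rewrite mulfV // gt_eqF.
  have : 0 < N^-1 by rewrite invr_gt0.
  move: (N^-1) => x h1 h2.
  have nx : 2 <= n%:R * x.
    have : 0 <= (n%:R - 2 * N) * x by apply: mulr_ge0; [rewrite subr_ge0 | apply: ltW].
    nra.
  have -> : n%:R / 2 * n%:R * x - n%:R / 2 = n%:R / 2 * (n%:R * x - 1) by ring.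
  apply: mulr_gt0; first by apply: divr_gt0.
  by rewrite subr_gt0 (lt_le_trans _ nx) // ltr1n.
move=> hT; have [j jT] : exists j, j \notin T.
  apply/existsP; move: hT; apply: contraR; rewrite negb_exists => /forallP h.
  by apply/eqP/setP => x; rewrite inE; move: (h x); rewrite negbK.
move: jT => jT.
rewrite [X in _ - _ * (_ * X)](bigD1 j) /= ?inE // subrr.
rewrite mul0r !mulr0 subr0.
apply: mulr_gt0; first by apply: mulr_gt0 => //; apply: divr_gt0.
by apply: mulr_gt0; apply: prodr_gt0.
Qed.

Lemma mod_eq (w : {set 'I_L} -> R) l : (0 < nl l)%N -> exp_edges n nl w != 0 ->
  modularity n nl w l = exp_internal n nl w l / exp_edges n nl w - (nl l)%:R^-1.
Proof.
move=> hl hE; have hl' : (nl l)%:R != 0 :> R by rewrite pnatr_eq0 -lt0n.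
rewrite /modularity sumr_const card_ord /d_l /e_lout /e_ll -mulr_natr.
by field; rewrite hl' hE.
Qed.

Lemma E_split (w : {set 'I_L} -> R) t : exp_edges n nl w =
  exp_internal n nl w t + \sum_(T : {set 'I_L} | t \notin T) pairs_exact R n nl T * w T.
Proof. by rewrite /exp_edges /exp_internal (bigID (fun T : {set 'I_L} => t \in T)). Qed.

End S.

Theorem theorem13 (R : realFieldType) (n : nat) (nl : 'I_3 -> nat)
  (p : 'I_3 -> R) :
  (forall l, (4 <= nl l)%N) ->
  (forall l, 20%:R^-1 <= p l <= 1) ->
  (2 * \prod_(l < 3) nl l <= n)%N ->
  forall t : 'I_3,
    modularity n nl (sbm_prob p) t <
    modularity n nl (remove_edges [set l | l != t] (sbm_prob p)) t.
Proof.
move=> hl hp hn t.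
have hl2 : forall l, (2 <= nl l)%N by move=> l; apply: leq_trans (hl l).
have hn' : (2 * \prod_(l in [set: 'I_3]) nl l <= n)%N.
  by rewrite (eq_bigl (fun=> true)) // => l; rewrite in_setT.
have pe0 := @pe_gt0 R 3 n nl hl2 hn'.
have p0 : forall l, 0 < p l.
  move=> l; case/andP: (hp l) => h _; apply: lt_le_trans h.
  by rewrite invr_gt0 ltr0n.
have w0 : forall T, 0 <= sbm_prob p T.
  move=> T; rewrite /sbm_prob subr_ge0; apply: prodr_ile1 => l _.
  by case/andP: (hp l) => _ h1; rewrite subr_ge0 h1 gerBl ltW.
have w1 : forall a, sbm_prob p [set a] = p a.
  by move=> a; rewrite /sbm_prob big_set1 opprB addrC subrK.
have wset0 : sbm_prob p set0 = 0 by rewrite /sbm_prob big_set0 subrr.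
have nl0 : (0 < nl t)%N by apply: leq_trans (hl t).
set D := [set l | l != t].
set w' := remove_edges D (sbm_prob p).
have w'0 : forall T, 0 <= w' T.
  by move=> T; rewrite /w' /remove_edges; case: ifP.
have I0 : 0 <= exp_internal n nl (sbm_prob p) t.
  by apply: sumr_ge0 => T _; apply: mulr_ge0; [apply: ltW|].
pose a : 'I_3 := if t == ord0 then 1 else ord0.
have at_ : t != a by rewrite /a; case: (eqVneq t ord0) => [->|h] //.
have J0 : 0 < \sum_(T : {set 'I_3} | t \notin T) pairs_exact R n nl T * sbm_prob p T.
  rewrite (bigD1 [set a]) ?inE //= w1; apply: ltr_pwDl.
    by apply: mulr_gt0.
  by apply: sumr_ge0 => T _; apply: mulr_ge0; [apply: ltW|].
have E0 : 0 < exp_edges n nl (sbm_prob p).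
  by rewrite (@E_split _ _ n nl _ t); move: I0 J0; lra.
have J'0 : \sum_(T : {set 'I_3} | t \notin T) pairs_exact R n nl T * w' T = 0.
  apply: big1 => T tT; rewrite /w' /remove_edges; case: ifP; last by rewrite mulr0.
  move=> dis; suff -> : T = set0 by rewrite wset0 mulr0.
  apply/setP => x; rewrite inE; apply/negP => xT.
  have := disjointFr dis xT; rewrite /D inE => /negbFE/eqP xt.
  by move: tT; rewrite -xt xT.
have I'0 : 0 < exp_internal n nl w' t.
  rewrite /exp_internal (bigD1 [set t]) ?inE //=; apply: ltr_pwDl.
    rewrite /w' /remove_edges disjoints1 /D inE eqxx /= w1.
    by apply: mulr_gt0.
  by apply: sumr_ge0 => T _; apply: mulr_ge0; [apply: ltW|].
have E'E : exp_edges n nl w' = exp_internal n nl w' t by rewrite (@E_split _ _ n nl _ t) J'0 addr0.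
rewrite !mod_eq ?E'E ?gt_eqF // divff ?gt_eqF // ltrD2r.
rewrite ltr_pdivrMr // mul1r (@E_split _ _ n nl _ t) ltrDl //.
Qed.
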